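(* Let $M$ be a deterministic finite automaton that satisfies the partial order condition. Then the minimal deterministic finite automaton accepting $L(M)$ also satisfies the partial order condition.
   Context: A DFA $(Q,\Sigma,\delta,q_0,F)$ (with $\delta$ extended to strings) satisfies the partial order condition if there do not exist two distinguishable states $q_1,q_2\in Q$ and strings $x,y\in\Sigma^+$ with $\delta(q_1,x)=\delta(q_2,x)=q_2$ and $\delta(q_2,y)=q_1$; here $q_1,q_2$ are distinguishable if there is $z\in\Sigma^*$ such that exactly one of $\delta(q_1,z),\delta(q_2,z)$ lies in $F$. *)

(* Defs.v *)
From mathcomp Require Import all_boot.
Set Implicit Arguments. Unset Strict Implicit. Unset Printing Implicit Defensive.

Record dfa (sigma : finType) := DFA {
  state : finType;
  delta : state -> sigma -> state;
  start : state;
  final : pred state }.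
Arguments state {sigma}.
Arguments delta {sigma d}.
Arguments start {sigma}.
Arguments final {sigma d}.

Section DFADefs.
Variable sigma : finType.
Variable M : dfa sigma.

Definition delta_star (q : state M) (w : seq sigma) : state M :=
  foldl (@delta sigma M) q w.

Definition accepts (w : seq sigma) : bool := @final sigma M (delta_star (start M) w).

Definition distinguishable (q1 q2 : state M) : Prop :=
  exists z : seq sigma,
    @final sigma M (delta_star q1 z) != @final sigma M (delta_star q2 z).

Definition partial_order_condition : Prop :=
  ~ exists (q1 q2 : state M) (x y : seq sigma),
      [/\ distinguishable q1 q2, 0 < size x, 0 < size y &
          [/\ delta_star q1 x = q2, delta_star q2 x = q2 & delta_star q2 y = q1]].
End DFADefs.

Definition same_language (sigma : finType) (M N : dfa sigma) : Prop :=
  forall w, accepts M w = accepts N w.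

Definition minimal_dfa_for (sigma : finType) (M N : dfa sigma) : Prop :=
  same_language M N /\
  forall N' : dfa sigma, same_language M N' -> #|state N| <= #|state N'|.

(* Main.v *)
Require Import Defs.
From mathcomp Require Import all_boot.
From mathcomp Require Import zify.
Set Implicit Arguments. Unset Strict Implicit. Unset Printing Implicit Defensive.

Section Aux.
Variable sigma : finType.

Lemma ds_cat (M : dfa sigma) (q : state M) u v :
  delta_star q (u ++ v) = delta_star (delta_star q u) v.
Proof. by rewrite /delta_star foldl_cat. Qed.

Definition pw (w : seq sigma) k := flatten (nseq k w).

Lemma ds_pw (M : dfa sigma) (q : state M) w k :
  delta_star q (pw w k) = iter k (fun s : state M => delta_star s w) q.
Proof.
elim: k q => [|k IH] q //=.
rewrite /pw /= ds_cat -/(pw w k) IH. exact: (esym (iterSr _ _ _)).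
Qed.

Lemma iter_add (T : Type) (f : T -> T) m n x : iter (m + n) f x = iter m f (iter n f x).
Proof. by rewrite iterD. Qed.

Lemma idem_pow (S : finType) (f : S -> S) :
  exists2 e, 0 < e & forall s, iter e f (iter e f s) = iter e f s.
Proof.
pose g (k : 'I_(#|{ffun S -> S}|).+1) : {ffun S -> S} := [ffun s => iter k.+1 f s].
have [i [j [nij gij]]] : exists i j, i != j /\ g i = g j.
  case: (boolP [exists i, exists j, (i != j) && (g i == g j)]).
    by move=> /existsP [i /existsP [j /andP [H /eqP H']]]; exists i, j.
  move=> /negP H; exfalso.
  have inj : injective g.
    move=> i j gij; apply/eqP; apply/negPn/negP => nij; apply: H.
    by apply/existsP; exists i; apply/existsP; exists j; rewrite nij gij eqxx.
  by have := leq_card _ inj; rewrite card_ord ltnn.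
have key : forall a p, 0 < a -> 0 < p ->
   (forall s, iter a f s = iter (a + p) f s) ->
   exists2 e, 0 < e & forall s, iter e f (iter e f s) = iter e f s.
  move=> a p a0 p0 H.
  have H1 : forall m s, iter (m + a) f s = iter (m + a + p) f s.
    by move=> m s; rewrite -addnA (iter_add f m (a + p)) iter_add H.
  have H2 : forall k m s, iter (m + a) f s = iter (m + a + k * p) f s.
    elim=> [|k IH] m s; first by rewrite mul0n addn0.
    have E1 : m + a + k * p = (m + k * p) + a by lia.
    have E2 : m + a + k.+1 * p = (m + k * p) + a + p by rewrite mulSn; lia.
    by rewrite IH E1 E2 H1.
  exists (a * p); first by rewrite muln_gt0 a0 p0.
  move=> s; rewrite -iter_add.
  have L : a <= a * p by rewrite leq_pmulr.
  have E := H2 a (a * p - a) s.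
  rewrite subnK in E; last exact: L.
  by rewrite -E.
wlog lt : i j nij gij / i < j.
  move=> W; case: (ltngtP i j) => h; first exact: (W i j).
  - by apply: (W j i) => //; rewrite eq_sym.
  - by move: nij; rewrite (val_inj h) eqxx.
have P : 0 < j - i by rewrite subn_gt0.
apply: (key _ _ (ltn0Sn i) P) => s. have := congr1 (fun h : {ffun S -> S} => h s) gij; rewrite /g !ffunE.
move=> ->; congr (iter _ f s); lia.
Qed.

End Aux.

Section Reach.
Variable sigma : finType.
Variable N : dfa sigma.

Definition rrel : rel (state N) := fun s s' => [exists a, delta s a == s'].
Definition Rch (s : state N) : bool := connect rrel (start N) s.

Lemma Rch_delta (s : state N) a : Rch s -> Rch (delta s a).
Proof.
move=> H; apply: (connect_trans H); apply: connect1.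
by apply/existsP; exists a.
Qed.

Definition sub_state := {s : state N | Rch s}.
Definition sub_delta (s : sub_state) (a : sigma) : sub_state :=
  exist _ (delta (val s) a) (Rch_delta a (valP s)).
Definition sub_start : sub_state := exist _ (start N) (connect0 _ _).
Definition subN : dfa sigma :=
  @DFA sigma sub_state sub_delta sub_start (fun s => final (val s)).

Lemma sub_ds (s : state subN) w :
  val (delta_star s w) = delta_star (val s) w.
Proof. by elim: w s => [|a w IH] s //=; rewrite IH. Qed.

Lemma subN_same : same_language N subN.
Proof. by move=> w; rewrite /accepts /= sub_ds. Qed.

Lemma Rch_word (s : state N) : Rch s -> exists w, delta_star (start N) w = s.
Proof.
move=> /connectP [p pth ->].
elim: p (start N) pth => [|y p IH] x /=; first by exists [::].
move=> /andP [/existsP [a /eqP Ha] pth].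
have [w Hw] := IH y pth; exists (a :: w).
by rewrite /delta_star /= Ha.
Qed.

End Reach.

Theorem lemma4p4 (sigma : finType) (M N : dfa sigma) :
  partial_order_condition M -> minimal_dfa_for M N -> partial_order_condition N.
Proof.
move=> poM [sameMN minN] [q1 [q2 [x [y [[z Hz] sx sy [E1 E2 E3]]]]]].
apply: poM.
have Rq1 : Rch q1.
  apply/negPn/negP => nR.
  have := minN (subN N) (fun w => etrans (sameMN w) (subN_same N w)).
  rewrite /= card_sig.
  have PR : [pred s | Rch s] \proper (predT : {pred state N}).
    rewrite properE; apply/andP; split; first by apply/subsetP.
    by apply/subsetPn; exists q1.
  by have := proper_card PR; rewrite ltnNge => /negP.
have [u Hu] := Rch_word Rq1.
have res : forall w z, final (delta_star (delta_star (start M) w) z)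
                     = final (delta_star (delta_star (start N) w) z).
  by move=> w z'; rewrite -!ds_cat; exact: sameMN.
have Nq2 : forall k, delta_star q2 (pw x k) = q2.
  by move=> k; rewrite ds_pw; elim: k => //= k ->.
have [e e0 He] := idem_pow (fun s : state M => delta_star s x).
set t := pw x e.
have te : t = x ++ pw x e.-1 by rewrite /t; case: (e) e0.
have Nt : delta_star q1 t = q2 by rewrite te ds_cat E1 Nq2.
set w := t ++ y.
have Nwk : forall k, delta_star q1 (pw w k) = q1.
  by move=> k; rewrite ds_pw; elim: k => //= k ->; rewrite ds_cat Nt E3.
have [f f0 Hf] := idem_pow (fun s : state M => delta_star s w).
have wf : pw w f = w ++ pw w f.-1 by case: (f) f0.
set p1 := delta_star (start M) (u ++ pw w f).
exists p1, (delta_star p1 t), t, (y ++ pw w f.-1).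
split.
- exists z.
  have -> : delta_star (delta_star p1 t) z
          = delta_star (delta_star (start M) ((u ++ pw w f) ++ t)) z.
    by rewrite [in RHS]ds_cat.
  by rewrite /p1 !res !ds_cat Hu Nwk Nt.
- by rewrite te size_cat addn_gt0 sx.
- by rewrite size_cat addn_gt0 sy.
- split => //.
  + by rewrite /t !ds_pw He.
  + rewrite -ds_cat catA -/w -wf /p1 ds_cat !ds_pw.
    exact: Hf.
Qed.
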